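(* A preordered group $(G,P_G)$ is a commutative object of the (unital) category $\mathsf{PreOrdGrp}$ if and only if $G$ is abelian. Consequently, the category $\mathsf{ComMon}(\mathsf{PreOrdGrp})$ of internal commutative monoids in $\mathsf{PreOrdGrp}$ coincides with $\mathsf{PreOrdAb}$.
   Context: A preordered group is a pair $(G,P_G)$ with $G$ an additively written group and $P_G\subseteq G$ a submonoid closed under conjugation; morphisms are group homomorphisms $f$ with $f(P_G)\subseteq P_H$. This is $\mathsf{PreOrdGrp}$; products are $(G\times H,P_G\times P_H)$. $\mathsf{PreOrdAb}$ is the full subcategory with $G$ abelian. $\mathsf{PreOrdGrp}$ is a unital category (pointed, finitely complete, and for all $X,Y$ the pair $l_X=\langle 1_X,0\rangle\colon X\to X\times Y$, $r_Y=\langle 0,1_Y\rangle\colon Y\to X\times Y$ is jointly strongly epimorphic). In a unital category an object $X$ is commutative if there is a morphism $\phi\colon X\times X\to X$ with $\phi\circ l_X=1_X=\phi\circ r_X$; in a unital category, the commutative objects form exactly the full subcategory of internal commutative monoids. *)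

(* Defs.v *)
(* A (not necessarily abelian) additively written group G together with a
   positive cone P_G : a submonoid closed under conjugation. *)
Record preOrdGrp := PreOrdGrp {
  carrier :> Type;
  add : carrier -> carrier -> carrier;
  zero : carrier;
  opp : carrier -> carrier;
  pos : carrier -> Prop;
  addA : forall x y z, add x (add y z) = add (add x y) z;
  add0g : forall x, add zero x = x;
  addg0 : forall x, add x zero = x;
  addNg : forall x, add (opp x) x = zero;
  addgN : forall x, add x (opp x) = zero;
  pos0 : pos zero;
  posD : forall x y, pos x -> pos y -> pos (add x y);
  posJ : forall a x, pos x -> pos (add (add a x) (opp a))
}.

Arguments add {p} _ _.
Arguments zero {p}.
Arguments opp {p} _.
Arguments pos {p} _.

Definition is_hom (G H : preOrdGrp) (f : G -> H) : Prop :=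
  (forall x y : G, f (add x y) = add (f x) (f y)) /\
  (forall x : G, pos x -> pos (f x)).

Definition prod_pog (G H : preOrdGrp) : preOrdGrp.
Proof.
refine (@PreOrdGrp (G * H)
  (fun u v => (add (fst u) (fst v), add (snd u) (snd v)))
  (zero, zero)
  (fun u => (opp (fst u), opp (snd u)))
  (fun u => pos (fst u) /\ pos (snd u)) _ _ _ _ _ _ _ _).
- intros [] [] []; simpl; rewrite !addA; reflexivity.
- intros []; simpl; rewrite !add0g; reflexivity.
- intros []; simpl; rewrite !addg0; reflexivity.
- intros []; simpl; rewrite !addNg; reflexivity.
- intros []; simpl; rewrite !addgN; reflexivity.
- simpl; split; apply pos0.
- intros [] [] [? ?] [? ?]; simpl in *; split; apply posD; assumption.
- intros [] [] [? ?]; simpl in *; split; apply posJ; assumption.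
Defined.

Definition unit_pog : preOrdGrp.
Proof.
refine (@PreOrdGrp unit (fun _ _ => tt) tt (fun _ => tt) (fun _ => True)
  _ _ _ _ _ _ _ _); try (intros; match goal with |- _ = _ => destruct x; reflexivity | _ => exact I end).
Defined.

Definition lX (X : preOrdGrp) : X -> prod_pog X X := fun x => (x, zero).
Definition rX (X : preOrdGrp) : X -> prod_pog X X := fun x => (zero, x).

Definition commutative_object (X : preOrdGrp) : Prop :=
  exists phi : prod_pog X X -> X,
    is_hom (prod_pog X X) X phi /\
    (forall x : X, phi (lX X x) = x) /\
    (forall x : X, phi (rX X x) = x).

(* Internal commutative monoid structure (m, e) on X in PreOrdGrp;
   the diagrams are checked pointwise (products are computed on carriers). *)
Definition internal_comm_monoid (X : preOrdGrp)
    (m : prod_pog X X -> X) (e : unit_pog -> X) : Prop :=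
  is_hom (prod_pog X X) X m /\ is_hom unit_pog X e /\
  (forall x y z : X, m (m (x, y), z) = m (x, m (y, z))) /\
  (forall x : X, m (e tt, x) = x) /\
  (forall x : X, m (x, e tt) = x) /\
  (forall x y : X, m (x, y) = m (y, x)).

Definition is_ComMon_object (X : preOrdGrp) : Prop :=
  exists m e, internal_comm_monoid X m e.

(* Objects of PreOrdAb. *)
Definition abelian (X : preOrdGrp) : Prop :=
  forall x y : X, add x y = add y x.

(* Main.v *)
Require Import Defs.

Lemma idem_zero (X : preOrdGrp) (a : X) : a = add a a -> a = zero.
Proof.
  intro H.
  assert (E : add (opp a) a = add (opp a) (add a a)) by (rewrite <- H; reflexivity).
  rewrite addA, addNg, add0g in E. symmetry; exact E.
Qed.

Lemma unit_hom_zero (X : preOrdGrp) (e : unit_pog -> X) :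
  is_hom unit_pog X e -> e tt = zero.
Proof.
  intros [Hm _]. apply idem_zero. exact (Hm tt tt).
Qed.

Lemma comm_of_phi (X : preOrdGrp) (phi : prod_pog X X -> X) :
  is_hom (prod_pog X X) X phi ->
  (forall x : X, phi (x, zero) = x) ->
  (forall x : X, phi (zero, x) = x) -> abelian X.
Proof.
  intros [Hm _] Hl Hr x y.
  assert (E1 : phi (x, y) = add x y).
  { pose proof (Hm (x, zero) (zero, y)) as H. simpl in H.
    rewrite addg0, add0g in H. rewrite H, Hl, Hr. reflexivity. }
  assert (E2 : phi (x, y) = add y x).
  { pose proof (Hm (zero, y) (x, zero)) as H. simpl in H.
    rewrite addg0, add0g in H. rewrite H, Hl, Hr. reflexivity. }
  rewrite <- E1, <- E2. reflexivity.
Qed.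

Lemma add_hom (X : preOrdGrp) : abelian X ->
  is_hom (prod_pog X X) X (fun u => add (fst u) (snd u)).
Proof.
  intros Hab. split.
  - intros [a b] [c d]; simpl.
    rewrite <- !addA. f_equal. rewrite !addA. f_equal. apply Hab.
  - intros [a b] [Ha Hb]; simpl. apply posD; assumption.
Qed.

Theorem proposition3p6 :
  forall X : preOrdGrp,
    (commutative_object X <-> abelian X) /\
    (is_ComMon_object X <-> abelian X).
Proof.
  intros X. split; split.
  - intros [phi [Hh [Hl Hr]]]. apply (comm_of_phi X phi Hh Hl Hr).
  - intros Hab. exists (fun u => add (fst u) (snd u)). split; [apply add_hom; exact Hab|].
    split; intro x; unfold lX, rX; simpl; [apply addg0 | apply add0g].
  - intros [m [e [Hm [He [_ [H1 [H2 _]]]]]]].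
    rewrite (unit_hom_zero X e He) in H1, H2.
    apply (comm_of_phi X m Hm H2 H1).
  - intros Hab. exists (fun u => add (fst u) (snd u)), (fun _ => zero).
    split; [apply add_hom; exact Hab|].
    split; [split; [intros; simpl; rewrite addg0; reflexivity | intros; apply pos0]|].
    split; [intros; simpl; rewrite addA; reflexivity|].
    split; [intros; simpl; apply add0g|].
    split; [intros; simpl; apply addg0|].
    intros; simpl; apply Hab.
Qed.
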